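(* Two quadrilaterals $Q_1,Q_2$ in $K^2$ have the same bisectors (the same bisecting lines, each with the same midpoint) if and only if they have the same bisector fields.
   Context: $K$ is a field of characteristic $\neq 2$. Every line $L$ in $K^2$ has an equation $tX-uY+v=0$ normalized so that $t=1$ if $u=0$ and $u=1$ if $u\neq 0$; coefficients denoted $t_L,u_L,v_L$. A quadrilateral $Q=ABA'B'$ consists of four distinct lines $A,B,A',B'$ (sides), not all through one point, with adjacent sides ($A,B$; $B,A'$; $A',B'$; $B',A$) not parallel; opposite sides may be parallel. Vertices: $A\cap B$, $B\cap A'$, $A'\cap B'$, $B'\cap A$ (two may coincide if three sides are concurrent). The centroid is the average of the four vertices. Let $\alpha=t_Au_Bu_{A'}u_{B'}-u_At_Bu_{A'}u_{B'}+u_Au_Bt_{A'}u_{B'}-u_Au_Bu_{A'}t_{B'}$, $\beta=t_Au_Bt_{A'}u_{B'}-u_At_Bu_{A'}t_{B'}$, $\gamma=t_At_Bt_{A'}u_{B'}-t_At_Bu_{A'}t_{B'}+t_Au_Bt_{A'}t_{B'}-u_At_Bt_{A'}t_{B'}$, and $\langle \mathbf v,\mathbf w\rangle_Q=\mathbf v^T\begin{pmatrix}\gamma&-\beta\\-\beta&\alpha\end{pmatrix}\mathbf w$. Lines $\ell_1,\ell_2$ are $Q$-orthogonal if $\langle (u_{\ell_1},t_{\ell_1}),(u_{\ell_2},t_{\ell_2})\rangle_Q=0$. A line $\ell$ crosses a pair $\{\ell_1,\ell_2\}$ if distinct from both and not parallel to both; $\mathrm{mid}_{\{\ell_1,\ell_2\}}(\ell)$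 is the midpoint of the points where $\ell$ meets $\ell_1,\ell_2$ (the point at infinity of $\ell$ if one is at infinity). $\ell$ bisects $Q$ (is a bisector) if $\mathrm{mid}_{\mathsf P}(\ell)$ is the same for all pairs $\mathsf P$ among $\{A,A'\},\{B,B'\}$ that $\ell$ crosses; this common point is the midpoint of the bisector. A pair $\{\ell_1,\ell_2\}$ of bisectors (possibly $\ell_1=\ell_2$) is a $Q$-pair if the midpoint of their midpoints is the centroid of $Q$ and $\ell_1,\ell_2$ are $Q$-orthogonal. The bisector field of $Q$ is the collection of all $Q$-pairs of bisectors of $Q$. *)

(* Defs.v *)
From HB Require Import structures.
From mathcomp Require Import all_boot all_order all_algebra.
From mathcomp Require Import ring.
Set Implicit Arguments. Unset Strict Implicit. Unset Printing Implicit Defensive.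
Import Order.TTheory GRing.Theory Num.Theory.
Local Open Scope ring_scope.

Section Quadrilaterals.
Variable K : fieldType.

Definition point := (K * K)%type.

(* A line with normalized equation  t X - u Y + v = 0,
   where u = 1, or (u = 0 and t = 1).  Normalization makes the coefficients
   (and hence Leibniz equality of records) determined by the line as a set. *)
Record line := Line {
  lt : K; lu : K; lv : K;
  lnorm : (lu == 1) || ((lu == 0) && (lt == 1)) }.

Definition on_line (L : line) (p : point) : Prop :=
  lt L * p.1 - lu L * p.2 + lv L = 0.

Definition parallel (L1 L2 : line) : bool :=
  (lt L1 == lt L2) && (lu L1 == lu L2).

(* Intersection point of two non-parallel lines (Cramer's rule). *)
Definition meet (L1 L2 : line) : point :=
  let D := lu L1 * lt L2 - lt L1 * lu L2 in
  ((lv L1 * lu L2 - lu L1 * lv L2) / D, (lt L2 * lv L1 - lt L1 * lv L2) / D).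

Definition midpt (p q : point) : point :=
  ((p.1 + q.1) / 2%:R, (p.2 + q.2) / 2%:R).

Record quad := Quad { qA : line; qB : line; qA' : line; qB' : line }.

Definition is_quad (Q : quad) : Prop :=
  [/\ (qA Q <> qB Q /\ qA Q <> qA' Q /\ qA Q <> qB' Q /\ qB Q <> qA' Q /\
          qB Q <> qB' Q /\ qA' Q <> qB' Q),
      ~ (exists p, [/\ on_line (qA Q) p, on_line (qB Q) p,
                       on_line (qA' Q) p & on_line (qB' Q) p]),
      ~~ parallel (qA Q) (qB Q) /\ ~~ parallel (qB Q) (qA' Q),
      ~~ parallel (qA' Q) (qB' Q) & ~~ parallel (qB' Q) (qA Q)].

Definition centroid (Q : quad) : point :=
  let P1 := meet (qA Q) (qB Q) in
  let P2 := meet (qB Q) (qA' Q) in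
  let P3 := meet (qA' Q) (qB' Q) in
  let P4 := meet (qB' Q) (qA Q) in
  ((P1.1 + P2.1 + P3.1 + P4.1) / 4%:R, (P1.2 + P2.2 + P3.2 + P4.2) / 4%:R).

Definition alpha (Q : quad) : K :=
  let: Quad A B A' B' := Q in
  lt A * lu B * lu A' * lu B' - lu A * lt B * lu A' * lu B'
  + lu A * lu B * lt A' * lu B' - lu A * lu B * lu A' * lt B'.
Definition beta (Q : quad) : K :=
  let: Quad A B A' B' := Q in
  lt A * lu B * lt A' * lu B' - lu A * lt B * lu A' * lt B'.
Definition gamma (Q : quad) : K :=
  let: Quad A B A' B' := Q in
  lt A * lt B * lt A' * lu B' - lt A * lt B * lu A' * lt B'
  + lt A * lu B * lt A' * lt B' - lu A * lt B * lt A' * lt B'.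

Definition qform (Q : quad) (v w : K * K) : K :=
  v.1 * (gamma Q * w.1 - beta Q * w.2) + v.2 * (- beta Q * w.1 + alpha Q * w.2).

Definition Q_orthogonal (Q : quad) (l1 l2 : line) : Prop :=
  qform Q (lu l1, lt l1) (lu l2, lt l2) = 0.

Definition crosses (l l1 l2 : line) : Prop :=
  [/\ l <> l1, l <> l2 & ~ (parallel l l1 && parallel l l2)].

(* mid_{l1,l2}(l): [None] stands for the point at infinity of l. *)
Definition mid (l1 l2 l : line) : option point :=
  if parallel l l1 || parallel l l2 then None
  else Some (midpt (meet l l1) (meet l l2)).

Definition bisects_with_mid (Q : quad) (l : line) (m : option point) : Prop :=
  [/\ crosses l (qA Q) (qA' Q) \/ crosses l (qB Q) (qB' Q),
      crosses l (qA Q) (qA' Q) -> mid (qA Q) (qA' Q) l = m &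
      crosses l (qB Q) (qB' Q) -> mid (qB Q) (qB' Q) l = m].

Definition bisector (Q : quad) (l : line) : Prop :=
  exists m, bisects_with_mid Q l m.

(* {l1,l2} is a Q-pair (midpoints must be affine points for the
   midpoint of the midpoints to be the centroid). *)
Definition Q_pair (Q : quad) (l1 l2 : line) : Prop :=
  exists m1 m2 : point,
    [/\ bisects_with_mid Q l1 (Some m1), bisects_with_mid Q l2 (Some m2),
        midpt m1 m2 = centroid Q & Q_orthogonal Q l1 l2].

Definition bisector_field (Q : quad) : line -> line -> Prop := Q_pair Q.

Lemma meet_on_lines (L1 L2 : line) :
  ~~ parallel L1 L2 -> on_line L1 (meet L1 L2) /\ on_line L2 (meet L1 L2).
Proof.
case: L1 L2 => [t1 u1 v1 n1] [t2 u2 v2 n2] /=; rewrite /parallel /on_line /meet /=.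
move=> hp.
have hD : u1 * t2 - t1 * u2 != 0.
  move: n1 n2 hp; case/orP=> [/eqP-> | /andP[/eqP-> /eqP->]];
  case/orP=> [/eqP-> | /andP[/eqP-> /eqP->]] => hp; apply/eqP => hD; move: hp.
  - have -> : t1 = t2.
      by apply/eqP; rewrite -subr_eq0 -oppr_eq0 -hD mul1r mulr1 opprB.
    by rewrite !eqxx.
  - by move: hD; rewrite mul1r mulr0 subr0 => /eqP; rewrite oner_eq0.
  - by move: hD; rewrite mul0r mulr1 sub0r => /eqP; rewrite oppr_eq0 oner_eq0.
  - by rewrite !eqxx.
by split; field.
Qed.

End Quadrilaterals.

(* Main.v *)
Require Import Defs.
From HB Require Import structures.
From mathcomp Require Import all_boot all_order all_algebra.
From mathcomp Require Import ring.
From Stdlib Require Import Classical_Prop.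
Set Implicit Arguments. Unset Strict Implicit. Unset Printing Implicit Defensive.
Import Order.TTheory GRing.Theory Num.Theory.
Local Open Scope ring_scope.

Section Basics.
Variable K : fieldType.
Hypothesis two0 : (2%:R : K) != 0.
Local Notation line := (line K).
Local Notation point := (point K).

Definition fl (L : line) (x : point) : K := lt L * x.1 - lu L * x.2 + lv L.
Definition gl (L : line) (d : K * K) : K := lt L * d.1 - lu L * d.2.
Definition dir (L : line) : K * K := (lu L, lt L).
Definition EE (L1 L2 : line) (x : point) (d : K * K) : K :=
  fl L1 x * gl L2 d + fl L2 x * gl L1 d.

Lemma line_ext (L S : line) : lt L = lt S -> lu L = lu S -> lv L = lv S -> L = S.
Proof.
case: L => t u v n; case: S => t' u' v' n' /= e1 e2 e3; subst.
by rewrite (bool_irrelevance n n').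
Qed.

Lemma norm_cases (L : line) : (lu L = 1) \/ (lu L = 0 /\ lt L = 1).
Proof.
case: L => t u v /= /orP [/eqP -> | /andP [/eqP -> /eqP ->]]; by [left | right].
Qed.

Lemma par_iff (L S : line) : parallel L S <-> gl S (dir L) = 0.
Proof.
rewrite /parallel /gl /dir /=; split.
  by case/andP => /eqP -> /eqP ->; rewrite mulrC subrr.
case: (norm_cases L) => [->|[-> ->]]; case: (norm_cases S) => [->|[-> ->]].
- by rewrite mulr1 mul1r => /eqP; rewrite subr_eq0 => /eqP ->; rewrite !eqxx.
- by rewrite mulr1 !mul0r subr0 => /eqP; rewrite oner_eq0.

- rewrite mulr0 mul1r sub0r => /eqP; by rewrite oppr_eq0 oner_eq0.
- by rewrite !eqxx.
Qed.

Lemma npar_iff (L S : line) : ~~ parallel L S <-> gl S (dir L) != 0.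
Proof.
split => h.
- apply/eqP => h'; move: h; by rewrite ((par_iff L S).2 h').
- apply/negP => /(par_iff L S).1 h'; by rewrite h' eqxx in h.
Qed.

Lemma glsym (L S : line) : gl S (dir L) = - gl L (dir S).
Proof. rewrite /gl /dir /=; ring. Qed.

Lemma par_sym (L S : line) : parallel L S = parallel S L.
Proof. by rewrite /parallel eq_sym [lu L == _]eq_sym. Qed.

Lemma par_trans (L S T : line) : parallel L S -> parallel S T -> parallel L T.
Proof. by rewrite /parallel => /andP[/eqP-> /eqP->]. Qed.

Lemma par_refl (L : line) : parallel L L.
Proof. by rewrite /parallel !eqxx. Qed.

Lemma fl_on (L : line) x : on_line L x <-> fl L x = 0.
Proof. by []. Qed.

Lemma eqlin (x y e : K) : x - y = e -> e = 0 -> x = y.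
Proof. by move=> h e0; apply/eqP; rewrite -subr_eq0 h e0. Qed.

Lemma eqlin2 (c1 c2 x y e1 e2 : K) :
  e1 = 0 -> e2 = 0 -> x - y = c1 * e1 + c2 * e2 -> x = y.
Proof. by move=> h1 h2 h; apply/eqP; rewrite -subr_eq0 h h1 h2 !mulr0 addr0. Qed.
Arguments eqlin2 c1 c2 {x y e1 e2}.

Lemma on_line_diff (L : line) p q : on_line L p -> on_line L q ->
  exists s, q = (p.1 + s * (dir L).1, p.2 + s * (dir L).2).
Proof.
rewrite /on_line /dir /=; case: p => p1 p2; case: q => q1 q2 /= hp hq.
have [e|[e1 e2]] := norm_cases L.
- exists (q1 - p1); rewrite e; congr pair; first by ring.
  apply: (eqlin2 1 (-1) hp hq); rewrite e; ring.
- exists (q2 - p2); rewrite e1 e2; congr pair; last by ring.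
  apply: (eqlin2 (-1) 1 hp hq); rewrite e1 e2; ring.
Qed.

Lemma fl_shift (L S : line) p s :
  fl S (p.1 + s * (dir L).1, p.2 + s * (dir L).2) = fl S p + s * gl S (dir L).
Proof. rewrite /fl /gl /=; ring. Qed.

Lemma meet_uniq (L S : line) p q : ~~ parallel L S ->
  on_line L p -> on_line S p -> on_line L q -> on_line S q -> p = q.
Proof.
move=> /npar_iff hn hLp hSp hLq hSq.
have [s es] := on_line_diff hLp hLq.
have : fl S q = 0 by [].
rewrite es fl_shift.
have -> : fl S p = 0 by [].
rewrite add0r => /eqP; rewrite mulf_eq0 (negPf hn) orbF => /eqP s0.
by rewrite s0 !mul0r !addr0; case: (p).
Qed.

Lemma meetS (L S : line) : ~~ parallel L S -> meet L S = meet S L.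
Proof.
move=> h; have h' : ~~ parallel S L by rewrite par_sym.
have [h1 h2] := meet_on_lines h; have [h3 h4] := meet_on_lines h'.
exact: meet_uniq h h1 h2 h4 h3.
Qed.

Lemma par_common_eq (L S : line) x : parallel L S -> on_line L x -> on_line S x -> L = S.
Proof.
rewrite /parallel /on_line => /andP[/eqP e1 /eqP e2] h1 h2.
apply: line_ext => //; move: h1 h2; rewrite e1 e2 => h1 h2.
apply/eqP; rewrite -subr_eq0; apply/eqP.
have : lt S * x.1 - lu S * x.2 + lv L - (lt S * x.1 - lu S * x.2 + lv S) = 0.
  by rewrite h1 h2 subr0.
by move=> <-; ring.
Qed.

Lemma midpt_on (L : line) p q : on_line L p -> on_line L q -> on_line L (midpt p q).
Proof.
rewrite /on_line /midpt /= => hp hq.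
have -> : lt L * ((p.1 + q.1) / 2%:R) - lu L * ((p.2 + q.2) / 2%:R) + lv L
  = ((lt L * p.1 - lu L * p.2 + lv L) + (lt L * q.1 - lu L * q.2 + lv L)) / 2%:R.
  by field.
by rewrite hp hq addr0 mul0r.
Qed.

Lemma EE_mid (L1 L2 : line) p q d :
  EE L1 L2 (midpt p q) d = (EE L1 L2 p d + EE L1 L2 q d) / 2%:R.
Proof. rewrite /EE /fl /midpt /=; by field. Qed.

End Basics.


Section L1.
Variable K : fieldType.
Hypothesis two0 : (2%:R : K) != 0.
Local Notation line := (line K).
Local Notation point := (point K).

Lemma gl_self (L : line) : gl L (dir L) = 0.
Proof. rewrite /gl /dir /=; ring. Qed.

Lemma EE_shift (S S' L : line) x s d :
  EE S S' (x.1 + s * (dir L).1, x.2 + s * (dir L).2) d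
  = EE S S' x d + s * (gl S (dir L) * gl S' d + gl S' (dir L) * gl S d).
Proof. rewrite /EE /fl /gl /=; ring. Qed.

Lemma M1 (l S S' : line) : ~~ parallel l S -> ~~ parallel l S' ->
  on_line l (midpt (meet l S) (meet l S')) /\
  EE S S' (midpt (meet l S) (meet l S')) (dir l) = 0.
Proof.
move=> h1 h2; have [hp1 hp2] := meet_on_lines h1; have [hq1 hq2] := meet_on_lines h2.
split; first exact: midpt_on.
move: hp1 hp2 hq1 hq2; move: (meet l S) (meet l S') => p q hp1 hp2 hq1 hq2.
have [s es] := on_line_diff hp1 hq1.
have fSp : fl S p = 0 by [].
have fS'q : fl S' q = 0 by [].
have fSq : fl S q = s * gl S (dir l) by rewrite es fl_shift fSp add0r.
have fS'p : fl S' p = - (s * gl S' (dir l)).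
  by move: fS'q; rewrite es fl_shift => /eqP; rewrite addr_eq0 => /eqP.
rewrite (EE_mid two0) /EE fSp fS'q fSq fS'p; field; exact: two0.
Qed.

Lemma M2 (l S S' : line) x y : gl S (dir l) != 0 -> gl S' (dir l) != 0 ->
  on_line l x -> on_line l y -> EE S S' x (dir l) = 0 -> EE S S' y (dir l) = 0 -> x = y.
Proof.
move=> g1 g2 hx hy ex ey.
have [s es] := on_line_diff hx hy.
move: ey; rewrite es EE_shift ex add0r.
have -> : gl S (dir l) * gl S' (dir l) + gl S' (dir l) * gl S (dir l)
   = 2%:R * (gl S (dir l) * gl S' (dir l)) by ring.
move/eqP; rewrite !mulf_eq0 (negPf two0) (negPf g1) (negPf g2) !orbF => /eqP s0.
by rewrite s0 !mul0r !addr0; case: (x).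
Qed.

Lemma mid_None (S S' l : line) : mid S S' l = None -> parallel l S || parallel l S'.
Proof. by rewrite /mid; case: ifP. Qed.

Lemma mid_Some (S S' l : line) x : mid S S' l = Some x ->
  [/\ ~~ parallel l S, ~~ parallel l S' & x = midpt (meet l S) (meet l S')].
Proof.
rewrite /mid; case: ifP => // /negbT; rewrite negb_or => /andP[h1 h2] [<-].
by split.
Qed.

Lemma nc_cases (l S S' : line) : ~ crosses l S S' ->
  l = S \/ l = S' \/ (parallel l S /\ parallel l S').
Proof.
move=> h; case: (classic (l = S)) => [->|n1]; first by left.
case: (classic (l = S')) => [->|n2]; first by right; left.
right; right; case: (boolP (parallel l S && parallel l S')) => [/andP[]//|n3].
by exfalso; apply: h; split => //; apply/negP.
Qed.

Lemma none_helper (S T T' l : line) : parallel l S -> ~~ parallel S T ->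
  ~~ parallel S T' -> (crosses l T T' -> mid T T' l = None) -> False.
Proof.
move=> hlS hST hST' h.
have c : crosses l T T'.
  split.
  - by move=> e; move: hST; rewrite -e par_sym hlS.
  - by move=> e; move: hST'; rewrite -e par_sym hlS.
  - case/andP=> hT _; move: hST; rewrite (par_trans _ hT) //.
    by rewrite par_sym.
case/orP: (mid_None (h c)) => hh.
- by move: hST; rewrite (par_trans _ hh) // par_sym.
- by move: hST'; rewrite (par_trans _ hh) // par_sym.
Qed.

Section Quad.
Variable Q : quad K.
Hypothesis hQ : is_quad Q.
Local Notation A := (qA Q).
Local Notation B := (qB Q).
Local Notation A' := (qA' Q).
Local Notation B' := (qB' Q).

Lemma qnpar : [/\ ~~ parallel A B, ~~ parallel B A', ~~ parallel A' B' & ~~ parallel B' A].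
Proof. by case: hQ => _ _ [h1 h2] h3 h4. Qed.

Lemma qneq : A <> B /\ A <> A' /\ A <> B' /\ B <> A' /\ B <> B' /\ A' <> B'.
Proof. by case: hQ. Qed.

Lemma qnopt : ~ (exists p, [/\ on_line A p, on_line B p, on_line A' p & on_line B' p]).
Proof. by case: hQ. Qed.

Lemma no_None l : ~ bisects_with_mid Q l None.
Proof.
case: qnpar => pAB pBA' pA'B' pB'A.
case=> [[c|c] h1 h2].
- case/orP: (mid_None (h1 c)) => hl.
  + apply: (none_helper hl pAB _ h2); by rewrite par_sym.
  + apply: (none_helper hl _ pA'B' h2); by rewrite par_sym.
- case/orP: (mid_None (h2 c)) => hl.
  + apply: (none_helper hl _ pBA' h1); by rewrite par_sym.
  + apply: (none_helper hl pB'A _ h1); by rewrite par_sym.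
Qed.

Lemma PC_on (S S' l : line) x : crosses l S S' -> mid S S' l = Some x ->
  [/\ on_line l x, EE S S' x (dir l) = 0, ~~ parallel l S & ~~ parallel l S'].
Proof.
move=> _ /mid_Some [h1 h2 ->]; have [? ?] := M1 h1 h2; by split.
Qed.

Lemma PC_nc (S S' l : line) x : ~ crosses l S S' -> on_line l x -> EE S S' x (dir l) = 0.
Proof.
move=> /nc_cases [->|[->|[h1 h2]]] hx; rewrite /EE.
- have -> : fl S x = 0 by []. by rewrite gl_self; ring.
- have -> : fl S' x = 0 by []. by rewrite gl_self; ring.
- by rewrite (proj1 (par_iff _ _) h1) (proj1 (par_iff _ _) h2); ring.
Qed.

Lemma PC_back (S S' l : line) x : crosses l S S' -> on_line l x ->
  EE S S' x (dir l) = 0 -> mid S S' l = Some x.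
Proof.
move=> [n1 n2 n3] hx he.
have hS : ~~ parallel l S.
  apply/negP => hp; apply: n1.
  have g0 : gl S (dir l) = 0 by apply/par_iff.
  have g1 : gl S' (dir l) != 0.
    apply/npar_iff/negP => hp'; by apply: n3; rewrite hp hp'.
  move: he; rewrite /EE g0 mulr0 addr0 => /eqP; rewrite mulf_eq0 (negPf g1) orbF => /eqP hSx.
  exact: par_common_eq hp hx hSx.
have hS' : ~~ parallel l S'.
  apply/negP => hp; apply: n2.
  have g0 : gl S' (dir l) = 0 by apply/par_iff.
  have g1 : gl S (dir l) != 0.
    apply/npar_iff/negP => hp'; by apply: n3; rewrite hp hp'.
  move: he; rewrite /EE g0 mulr0 add0r => /eqP; rewrite mulf_eq0 (negPf g1) orbF => /eqP hSx.
  exact: par_common_eq hp hx hSx.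
have [m1 m2] := M1 hS hS'.
rewrite /mid (negPf hS) (negPf hS') /=; congr Some.
apply: (M2 _ _ m1 hx m2 he); by apply/npar_iff.
Qed.

Lemma some_cross l : crosses l A A' \/ crosses l B B'.
Proof.
case: qnpar => pAB pBA' pA'B' pB'A; case: qneq => nAB [nAA' [nAB' [nBA' [nBB' nA'B']]]].
case: (classic (crosses l A A')) => [c|c]; first by left.
case: (classic (crosses l B B')) => [d|d]; first by right.
exfalso.
have pBA : ~~ parallel B A by rewrite par_sym.
have pA'B : ~~ parallel A' B by rewrite par_sym.
have pAB' : ~~ parallel A B' by rewrite par_sym.
have pB'A' : ~~ parallel B' A' by rewrite par_sym.
have X : forall S T, ~~ parallel S T -> parallel l S -> parallel l T -> False.
  move=> S T h h1 h2; move: h; rewrite (par_trans _ h2) //; by rewrite par_sym.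
case/nc_cases: c => [e|[e|[c1 c2]]]; case/nc_cases: d => [f|[f|[d1 d2]]].
all: try (by apply: nAB; rewrite -e -f).
all: try (by apply: nAB'; rewrite -e -f).
all: try (by apply: nBA'; rewrite -e -f).
all: try (by apply: nA'B'; rewrite -e -f).
all: try (subst l; by [apply: (X _ _ pAB (par_refl _) d1) | apply: (X _ _ pA'B (par_refl _) d1)]).
all: try (subst l; by [apply: (X _ _ pBA (par_refl _) c1) | apply: (X _ _ pB'A (par_refl _) c1)]).
by apply: (X _ _ pAB c1 d1).
Qed.

Lemma L1 l m : bisects_with_mid Q l m <->
  exists x, [/\ m = Some x, on_line l x, EE A A' x (dir l) = 0 & EE B B' x (dir l) = 0].
Proof.
split.
- case: m => [x|/no_None//] hb; exists x; case: hb => hc h1 h2.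
  have hx : on_line l x.
    case: hc => c; [by case: (PC_on c (h1 c)) | by case: (PC_on c (h2 c))].
  split => //.
  + case: (classic (crosses l A A')) => c; [by case: (PC_on c (h1 c)) | exact: PC_nc].
  + case: (classic (crosses l B B')) => c; [by case: (PC_on c (h2 c)) | exact: PC_nc].
- case=> x [-> hx e1 e2]; split; first exact: some_cross.
  + move=> c; exact: PC_back.
  + move=> c; exact: PC_back.
Qed.

End Quad.
End L1.


Section Poly.
Variable K : fieldType.
Hypothesis two0 : (2%:R : K) != 0.
Local Notation line := (line K).
Local Notation point := (point K).

Record poly2 := Pol { c0 : K; c1 : K; c2 : K; c3 : K; c4 : K; c5 : K }.

Definition prodp (L1 L2 : line) : poly2 :=
  Pol (lt L1 * lt L2) (- (lt L1 * lu L2 + lu L1 * lt L2)) (lu L1 * lu L2)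
     (lt L1 * lv L2 + lv L1 * lt L2) (- (lu L1 * lv L2 + lv L1 * lu L2)) (lv L1 * lv L2).

Definition DC (c : poly2) (x : point) (d : K * K) : K :=
  (2%:R * c0 c * x.1 + c1 c * x.2 + c3 c) * d.1
  + (c1 c * x.1 + 2%:R * c2 c * x.2 + c4 c) * d.2.

Definition qc (c : poly2) (d : K * K) : K :=
  c0 c * (d.1 * d.1) + c1 c * (d.1 * d.2) + c2 c * (d.2 * d.2).

Definition comb (a b k : K) (p q : poly2) : poly2 :=
  Pol (a * c0 p + b * c0 q) (a * c1 p + b * c1 q) (a * c2 p + b * c2 q)
     (a * c3 p + b * c3 q) (a * c4 p + b * c4 q) (a * c5 p + b * c5 q + k).

Definition lc3 (x y z : poly2) (a b : K) : poly2 :=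
  Pol (c0 x - a * c0 y - b * c0 z) (c1 x - a * c1 y - b * c1 z) (c2 x - a * c2 y - b * c2 z)
     (c3 x - a * c3 y - b * c3 z) (c4 x - a * c4 y - b * c4 z) (c5 x - a * c5 y - b * c5 z).

Lemma DC_prodp L1 L2 x d : DC (prodp L1 L2) x d = EE L1 L2 x d.
Proof. rewrite /DC /EE /fl /gl /=; ring. Qed.

Lemma qc_prodp L1 L2 d : qc (prodp L1 L2) d = gl L1 d * gl L2 d.
Proof. rewrite /qc /gl /=; ring. Qed.

Lemma DC_comb a b k p q x d : DC (comb a b k p q) x d = a * DC p x d + b * DC q x d.
Proof. rewrite /DC /=; ring. Qed.

Lemma qc_comb a b k p q d : qc (comb a b k p q) d = a * qc p d + b * qc q d.
Proof. rewrite /qc /=; ring. Qed.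

Lemma DC_lc3 x y z a b p d : DC (lc3 x y z a b) p d = DC x p d - a * DC y p d - b * DC z p d.
Proof. rewrite /DC /=; ring. Qed.

Lemma qc_lc3 x y z a b d : qc (lc3 x y z a b) d = qc x d - a * qc y d - b * qc z d.
Proof. rewrite /qc /=; ring. Qed.

Definition vadd (d e : K * K) : K * K := (d.1 + e.1, d.2 + e.2).

Lemma QZ (c : poly2) (d e : K * K) : d.1 * e.2 - d.2 * e.1 != 0 ->
  qc c d = 0 -> qc c e = 0 -> qc c (vadd d e) = 0 ->
  [/\ c0 c = 0, c1 c = 0 & c2 c = 0].
Proof.
move=> hdet h1 h2 h3.
set P := qc c (vadd d e) - qc c d - qc c e.
have hP : P = 0 by rewrite /P h1 h2 h3; ring.
set D := d.1 * e.2 - d.2 * e.1.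
have e0 : D * D * c0 c = e.2 * e.2 * qc c d - e.2 * d.2 * P + d.2 * d.2 * qc c e.
  rewrite /P /D /qc /vadd /=; ring.
have e2 : D * D * c2 c = e.1 * e.1 * qc c d - e.1 * d.1 * P + d.1 * d.1 * qc c e.
  rewrite /P /D /qc /vadd /=; ring.
have e1 : D * D * (c0 c + c1 c + c2 c) =
   (e.2 - e.1) * (e.2 - e.1) * qc c d + (e.2 - e.1) * (d.1 - d.2) * P
   + (d.1 - d.2) * (d.1 - d.2) * qc c e.
  rewrite /P /D /qc /vadd /=; ring.
rewrite h1 h2 hP in e0 e1 e2.
have DD : D * D != 0 by rewrite mulf_neq0.
have z0 : c0 c = 0.
  by apply/eqP; move: e0; rewrite ?mulr0 ?mul0r ?addr0 ?subr0 => /eqP; rewrite mulf_eq0 (negPf DD).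
have z2 : c2 c = 0.
  by apply/eqP; move: e2; rewrite ?mulr0 ?mul0r ?addr0 ?subr0 => /eqP; rewrite mulf_eq0 (negPf DD).
split => //.
apply/eqP; move: e1; rewrite z0 z2 ?mulr0 ?mul0r ?addr0 ?add0r => /eqP.
by rewrite mulf_eq0 (negPf DD).
Qed.

Lemma W0 (w1 w2 : K) (d e : K * K) : d.1 * e.2 - d.2 * e.1 != 0 ->
  w1 * d.1 + w2 * d.2 = 0 -> w1 * e.1 + w2 * e.2 = 0 -> w1 = 0 /\ w2 = 0.
Proof.
move=> hD h1 h2.
have a1 : (d.1 * e.2 - d.2 * e.1) * w1 = e.2 * (w1 * d.1 + w2 * d.2) - d.2 * (w1 * e.1 + w2 * e.2).
  by ring.
have a2 : (d.1 * e.2 - d.2 * e.1) * w2 = d.1 * (w1 * e.1 + w2 * e.2) - e.1 * (w1 * d.1 + w2 * d.2).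
  by ring.
rewrite h1 h2 !mulr0 subr0 in a1 a2.
split; apply/eqP; [move/eqP: a1 | move/eqP: a2]; by rewrite mulf_eq0 (negPf hD).
Qed.

Lemma PhiL_prodp (Q : quad K) L1 L2 :
  alpha Q * c0 (prodp L1 L2) + beta Q * c1 (prodp L1 L2) + gamma Q * c2 (prodp L1 L2)
  = qform Q (lu L1, lt L1) (lu L2, lt L2).
Proof. rewrite /qform /=; ring. Qed.

Lemma Phi_AA' (Q : quad K) : qform Q (dir (qA Q)) (dir (qA' Q)) = 0.
Proof. case: Q => A B A' B'; rewrite /qform /alpha /beta /gamma /dir /=; ring. Qed.

Lemma Phi_BB' (Q : quad K) : qform Q (dir (qB Q)) (dir (qB' Q)) = 0.
Proof. case: Q => A B A' B'; rewrite /qform /alpha /beta /gamma /dir /=; ring. Qed.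

Lemma Phi_AB (Q : quad K) : qform Q (dir (qA Q)) (dir (qB Q)) =
  gl (qA' Q) (dir (qB Q)) * gl (qB' Q) (dir (qA Q)) * gl (qA Q) (dir (qB Q)).
Proof. case: Q => A B A' B'; rewrite /qform /alpha /beta /gamma /dir /gl /=; ring. Qed.

Lemma four0 : (4%:R : K) != 0.
Proof. by rewrite (natrM K 2 2) mulf_neq0. Qed.

Lemma midptC (p q : point) : midpt p q = midpt q p.
Proof. by rewrite /midpt addrC [p.2 + _]addrC. Qed.

Lemma fl_midpt (L : line) p q : fl L (midpt p q) = (fl L p + fl L q) / 2%:R.
Proof. rewrite /fl /midpt /=; field; exact: two0. Qed.

End Poly.


Section QuadFacts.
Variable K : fieldType.
Hypothesis two0 : (2%:R : K) != 0.
Local Notation line := (line K).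
Local Notation point := (point K).
Variable Q : quad K.
Hypothesis hQ : is_quad Q.
Local Notation A := (qA Q).
Local Notation B := (qB Q).
Local Notation A' := (qA' Q).
Local Notation B' := (qB' Q).

Definition pA := prodp A A'.
Definition pB := prodp B B'.
Definition pAB := prodp A B.
Definition inV (c : poly2 K) := exists a b k, c = comb a b k pA pB.

Definition P1 := meet A B.
Definition P2 := meet B A'.
Definition P3 := meet A' B'.
Definition P4 := meet B' A.
Definition mA := midpt P1 P4.
Definition mB := midpt P1 P2.
Definition mA' := midpt P2 P3.
Definition mB' := midpt P3 P4.

Let np := qnpar hQ.
Lemma nAB : ~~ parallel A B. Proof. by case: np. Qed.
Lemma nBA' : ~~ parallel B A'. Proof. by case: np. Qed.
Lemma nA'B' : ~~ parallel A' B'. Proof. by case: np. Qed.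
Lemma nB'A : ~~ parallel B' A. Proof. by case: np. Qed.
Lemma nBA : ~~ parallel B A. Proof. by rewrite par_sym nAB. Qed.
Lemma nA'B : ~~ parallel A' B. Proof. by rewrite par_sym nBA'. Qed.
Lemma nB'A' : ~~ parallel B' A'. Proof. by rewrite par_sym nA'B'. Qed.
Lemma nAB' : ~~ parallel A B'. Proof. by rewrite par_sym nB'A. Qed.

Lemma den_nz (L S : line) : ~~ parallel L S -> lu L * lt S - lt L * lu S != 0.
Proof. by move/npar_iff; rewrite /gl /dir /= mulrC [lu S * _]mulrC. Qed.

Lemma cent_A : midpt mA mA' = centroid Q.
Proof.
rewrite /centroid /mA /mA' /midpt /P1 /P2 /P3 /P4 /=.
have f := four0 two0.
congr pair; field; by rewrite f two0 (den_nz nB'A) (den_nz nA'B') (den_nz nBA') (den_nz nAB).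
Qed.

Lemma cent_B : midpt mB mB' = centroid Q.
Proof.
rewrite /centroid /mB /mB' /midpt /P1 /P2 /P3 /P4 /=.
have f := four0 two0.
congr pair; field; by rewrite f two0 (den_nz nB'A) (den_nz nA'B') (den_nz nBA') (den_nz nAB).
Qed.

Lemma gnz (L S : line) : ~~ parallel L S -> gl S (dir L) != 0.
Proof. by move/npar_iff. Qed.

Lemma P1_on : on_line A P1 /\ on_line B P1. Proof. exact: meet_on_lines nAB. Qed.
Lemma P2_on : on_line B P2 /\ on_line A' P2. Proof. exact: meet_on_lines nBA'. Qed.
Lemma P3_on : on_line A' P3 /\ on_line B' P3. Proof. exact: meet_on_lines nA'B'. Qed.
Lemma P4_on : on_line B' P4 /\ on_line A P4. Proof. exact: meet_on_lines nB'A. Qed.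

Lemma EE_self1 (S T l : line) x : on_line S x -> l = S -> EE S T x (dir l) = 0.
Proof. move=> h ->; rewrite /EE gl_self; have -> : fl S x = 0 by []. ring. Qed.
Lemma EE_self2 (S T l : line) x : on_line T x -> l = T -> EE S T x (dir l) = 0.
Proof. move=> h ->; rewrite /EE gl_self; have -> : fl T x = 0 by []. ring. Qed.

Lemma sideA : on_line A mA /\ EE A A' mA (dir A) = 0 /\ EE B B' mA (dir A) = 0.
Proof.
have hm : on_line A mA by apply: midpt_on => //; [exact: P1_on.1 | exact: P4_on.2].
split => //; split; first exact: EE_self1.
rewrite /mA /P1 /P4 (meetS nB'A); exact: (M1 two0 nAB nAB').2.
Qed.

Lemma sideB : on_line B mB /\ EE A A' mB (dir B) = 0 /\ EE B B' mB (dir B) = 0.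
Proof.
have hm : on_line B mB by apply: midpt_on => //; [exact: P1_on.2 | exact: P2_on.1].
split => //; split; last exact: EE_self1.
rewrite /mB /P1 /P2 (meetS nAB); exact: (M1 two0 nBA nBA').2.
Qed.

Lemma sideA' : on_line A' mA' /\ EE A A' mA' (dir A') = 0 /\ EE B B' mA' (dir A') = 0.
Proof.
have hm : on_line A' mA' by apply: midpt_on => //; [exact: P2_on.2 | exact: P3_on.1].
split => //; split; first exact: EE_self2.
rewrite /mA' /P2 /P3 (meetS nBA'); exact: (M1 two0 nA'B nA'B').2.
Qed.

Lemma sideB' : on_line B' mB' /\ EE A A' mB' (dir B') = 0 /\ EE B B' mB' (dir B') = 0.
Proof.
have hm : on_line B' mB' by apply: midpt_on => //; [exact: P3_on.2 | exact: P4_on.1].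
split => //; split; last exact: EE_self2.
rewrite /mB' /P3 /P4 midptC (meetS nA'B'); exact: (M1 two0 nB'A nB'A').2.
Qed.

End QuadFacts.


Section Gen.
Variable K : fieldType.
Hypothesis two0 : (2%:R : K) != 0.
Local Notation line := (line K).
Local Notation point := (point K).

Definition shift (L : line) (x : point) (s : K) : point :=
  (x.1 + s * (dir L).1, x.2 + s * (dir L).2).

Lemma exists_on (l : line) : exists x, on_line l x.
Proof.
case: (norm_cases l) => [e|[e1 e2]].
- exists (0, lv l); rewrite /on_line e /=; ring.
- exists (- lv l, 0); rewrite /on_line e1 e2 /=; ring.
Qed.

Lemma BEgen (S S' T T' l : line) (a b : K) :
  gl S (dir l) * gl S' (dir l) != 0 ->
  (forall x, on_line l x -> a * EE S S' x (dir l) + b * EE T T' x (dir l) = 0) ->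
  ~ (a = 0 /\ b = 0) ->
  exists x, [/\ on_line l x, EE S S' x (dir l) = 0 & EE T T' x (dir l) = 0].
Proof.
move=> hq H hab.
have [x0 h0] := exists_on l.
set q := gl S (dir l) * gl S' (dir l) in hq.
set s := - EE S S' x0 (dir l) / (2%:R * q).
have q2 : 2%:R * q != 0 by rewrite mulf_neq0.
have on1 : on_line l (shift l x0 s).
  rewrite /on_line -/(fl l _) /shift fl_shift gl_self.
  have -> : fl l x0 = 0 by []. ring.
have e1 : EE S S' (shift l x0 s) (dir l) = 0.
  rewrite /shift EE_shift /s.
  have -> : gl S (dir l) * gl S' (dir l) + gl S' (dir l) * gl S (dir l) = 2%:R * q.
    rewrite /q; ring.
  field; by rewrite hq two0.
exists (shift l x0 s); split => //.
have := H _ on1; rewrite e1 mulr0 add0r => /eqP; rewrite mulf_eq0 => /orP[/eqP b0|/eqP //].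
exfalso; apply: hab; split => //.
have on2 : on_line l (shift l (shift l x0 s) 1).
  rewrite /on_line -/(fl l _) /shift fl_shift gl_self.
  have -> : fl l (shift l x0 s) = 0 by []. ring.
have := H _ on2; rewrite b0 mul0r addr0.
rewrite {1}/shift EE_shift e1 add0r.
have -> : gl S (dir l) * gl S' (dir l) + gl S' (dir l) * gl S (dir l) = 2%:R * q.
  rewrite /q; ring.
move/eqP; rewrite mul1r mulf_eq0 (negPf q2) orbF => /eqP //.
Qed.

Lemma norm_prod_nz (l1 l2 : line) :
  ~ [/\ lt l1 * lt l2 = 0, lt l1 * lu l2 + lu l1 * lt l2 = 0 & lu l1 * lu l2 = 0].
Proof.
case: (norm_cases l1) => [e|[e1 e2]]; case: (norm_cases l2) => [f|[f1 f2]] [h1 h2 h3].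
- by move: h3; rewrite e f mul1r => /eqP; rewrite oner_eq0.
- by move: h2; rewrite e f1 f2 mulr0 mul1r add0r => /eqP; rewrite oner_eq0.
- by move: h2; rewrite e1 e2 f mul1r mul0r addr0 => /eqP; rewrite oner_eq0.
- by move: h1; rewrite e2 f2 mul1r => /eqP; rewrite oner_eq0.
Qed.

Lemma comb10 (p q : poly2 K) : p = comb 1 0 0 p q.
Proof. case: p => ? ? ? ? ? ?; rewrite /comb /=; congr Pol; ring. Qed.

End Gen.


Section Main.
Variable K : fieldType.
Hypothesis two0 : (2%:R : K) != 0.
Local Notation line := (line K).
Local Notation point := (point K).
Variable Q : quad K.
Hypothesis hQ : is_quad Q.
Local Notation A := (qA Q).
Local Notation B := (qB Q).
Local Notation A' := (qA' Q).
Local Notation B' := (qB' Q).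
Local Notation pA := (pA Q).
Local Notation pB := (pB Q).
Local Notation pAB := (pAB Q).

Lemma bisA : bisects_with_mid Q A (Some (mA Q)).
Proof. apply/(L1 two0 hQ); exists (mA Q); case: (sideA two0 hQ) => h1 [h2 h3]; by split. Qed.
Lemma bisB : bisects_with_mid Q B (Some (mB Q)).
Proof. apply/(L1 two0 hQ); exists (mB Q); case: (sideB two0 hQ) => h1 [h2 h3]; by split. Qed.
Lemma bisA' : bisects_with_mid Q A' (Some (mA' Q)).
Proof. apply/(L1 two0 hQ); exists (mA' Q); case: (sideA' two0 hQ) => h1 [h2 h3]; by split. Qed.
Lemma bisB' : bisects_with_mid Q B' (Some (mB' Q)).
Proof. apply/(L1 two0 hQ); exists (mB' Q); case: (sideB' two0 hQ) => h1 [h2 h3]; by split. Qed.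

Lemma V_bis c l x : inV Q c -> bisects_with_mid Q l (Some x) -> DC c x (dir l) = 0.
Proof.
case=> a [b [k ->]] /(L1 two0 hQ) [y [[<-] _ e1 e2]].
by rewrite DC_comb /pA /pB !DC_prodp e1 e2 !mulr0 addr0.
Qed.

Definition aC c := qc c (dir B) / qc pA (dir B).
Definition bC c := qc c (dir A) / qc pB (dir A).
Definition rr c := lc3 c pA pB (aC c) (bC c).
Definition rho c := qc (rr c) (vadd (dir A) (dir B)) / (gl A (dir B) * gl B (dir A)).
Definition w3 c := c3 (rr c) - rho c * c3 pAB.
Definition w4 c := c4 (rr c) - rho c * c4 pAB.

Lemma gAB : gl A (dir B) != 0. Proof. exact: gnz (nBA hQ). Qed.
Lemma gBA : gl B (dir A) != 0. Proof. exact: gnz (nAB hQ). Qed.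
Lemma gB'A : gl B' (dir A) != 0. Proof. exact: gnz (nAB' hQ). Qed.
Lemma gA'B : gl A' (dir B) != 0. Proof. exact: gnz (nBA' hQ). Qed.
Lemma gBA' : gl B (dir A') != 0. Proof. exact: gnz (nA'B hQ). Qed.
Lemma gAB' : gl A (dir B') != 0. Proof. exact: gnz (nB'A hQ). Qed.

Lemma resid_quad c : [/\ c0 (rr c) = rho c * c0 pAB, c1 (rr c) = rho c * c1 pAB
   & c2 (rr c) = rho c * c2 pAB].
Proof.
have qpBA : qc pB (dir A) != 0 by rewrite /pB qc_prodp mulf_neq0 // ?gBA ?gB'A.
have qpAB : qc pA (dir B) != 0 by rewrite /pA qc_prodp mulf_neq0 // ?gAB ?gA'B.
have [h0 h1 h2] : [/\ c0 (lc3 (rr c) pAB pAB (rho c) 0) = 0,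
   c1 (lc3 (rr c) pAB pAB (rho c) 0) = 0 & c2 (lc3 (rr c) pAB pAB (rho c) 0) = 0].
  apply: (QZ (d := dir A) (e := dir B)).
  - exact: (den_nz (nAB hQ)).
  - rewrite qc_lc3 /rr qc_lc3 /pAB /pA /aC /bC !qc_prodp gl_self; field; by rewrite ?gB'A ?gBA ?gA'B ?gAB.
  - rewrite qc_lc3 /rr qc_lc3 /pAB /pB /aC /bC !qc_prodp gl_self; field; by rewrite ?gB'A ?gBA ?gA'B ?gAB.
  - rewrite qc_lc3 /pAB qc_prodp /rho.
    have -> : gl A (vadd (dir A) (dir B)) = gl A (dir B).
      by rewrite /gl /vadd /dir /=; ring.
    have -> : gl B (vadd (dir A) (dir B)) = gl B (dir A).
      by rewrite /gl /vadd /dir /=; ring.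
    field; by rewrite ?gB'A ?gBA ?gA'B ?gAB.
move: h0 h1 h2; rewrite /lc3 /= !mul0r !subr0 => /eqP h0 /eqP h1 /eqP h2.
by split; apply/eqP; rewrite -subr_eq0.
Qed.

Lemma resid_DC c x d : DC (rr c) x d = rho c * EE A B x d + (w3 c * d.1 + w4 c * d.2).
Proof.
case: (resid_quad c) => h0 h1 h2.
rewrite -DC_prodp /DC /w3 /w4 h0 h1 h2 /=; ring.
Qed.

Lemma resid_DC' c x d :
  DC (rr c) x d = DC c x d - aC c * EE A A' x d - bC c * EE B B' x d.
Proof. by rewrite /rr DC_lc3 /pA /pB !DC_prodp. Qed.

Lemma resid_inV c : rho c = 0 -> w3 c = 0 -> w4 c = 0 -> inV Q c.
Proof.
move=> r0 e3 e4; case: (resid_quad c); rewrite r0 !mul0r => h0 h1 h2.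
move: e3 e4; rewrite /w3 /w4 r0 !mul0r !subr0 => e3 e4.
exists (aC c), (bC c), (c5 (rr c)).
move: h0 h1 h2 e3 e4; clear r0; rewrite /rr /lc3 /comb /=.
case: c => x0 x1 x2 x3 x4 x5 /= h0 h1 h2 h3 h4.
congr Pol; apply/eqP; rewrite -subr_eq0; apply/eqP.
- by rewrite -h0; ring.
- by rewrite -h1; ring.
- by rewrite -h2; ring.
- by rewrite -h3; ring.
- by rewrite -h4; ring.
- ring.
Qed.

Lemma EEAB_A' : EE A B (mA' Q) (dir A') = gl B (dir A') * fl A (P3 Q).
Proof.
rewrite /mA'; have [hp1 hp2] := P2_on hQ; have [hq1 hq2] := P3_on hQ.
move: hp1 hp2 hq1 hq2; move: (P2 Q) (P3 Q) => p q hp1 hp2 hq1 hq2.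
have [s es] := on_line_diff hp2 hq1.
rewrite es (EE_mid two0) /EE !fl_shift.
have -> : fl B p = 0 by [].
field; exact: two0.
Qed.

Lemma EEAB_B' : EE A B (mB' Q) (dir B') = gl A (dir B') * fl B (P3 Q).
Proof.
rewrite /mB'; have [hp1 hp2] := P4_on hQ; have [hq1 hq2] := P3_on hQ.
move: hp1 hp2 hq1 hq2; move: (P4 Q) (P3 Q) => p q hp1 hp2 hq1 hq2.
have [s es] := on_line_diff hp1 hq2.
rewrite es (EE_mid two0) /EE !fl_shift.
have -> : fl A p = 0 by [].
field; exact: two0.
Qed.

Lemma P3main c : (forall l x, bisects_with_mid Q l (Some x) -> DC c x (dir l) = 0) ->
  inV Q c.
Proof.
move=> H.
have rA : DC (rr c) (mA Q) (dir A) = 0.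
  case: (sideA two0 hQ) => _ [e1 e2]; by rewrite resid_DC' (H _ _ bisA) e1 e2; ring.
have rB : DC (rr c) (mB Q) (dir B) = 0.
  case: (sideB two0 hQ) => _ [e1 e2]; by rewrite resid_DC' (H _ _ bisB) e1 e2; ring.
have rA' : DC (rr c) (mA' Q) (dir A') = 0.
  case: (sideA' two0 hQ) => _ [e1 e2]; by rewrite resid_DC' (H _ _ bisA') e1 e2; ring.
have rB' : DC (rr c) (mB' Q) (dir B') = 0.
  case: (sideB' two0 hQ) => _ [e1 e2]; by rewrite resid_DC' (H _ _ bisB') e1 e2; ring.
move: rA rB rA' rB'; rewrite !resid_DC.
rewrite (EE_self1 _ (sideA two0 hQ).1 erefl) (EE_self2 _ (sideB two0 hQ).1 erefl).
rewrite EEAB_A' EEAB_B' !mulr0 !add0r => wA wB rA' rB'.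
have [z3 z4] := W0 (d := dir A) (e := dir B) (den_nz (nAB hQ)) wA wB.
rewrite z3 z4 !mul0r !addr0 in rA' rB'.
have r0 : rho c = 0.
  apply/eqP/negP => /negP nr.
  have fA : fl A (P3 Q) = 0.
    move/eqP: rA'; rewrite mulf_eq0 => /orP[/eqP r|]; first by move: nr; rewrite r eqxx.
    rewrite mulf_eq0 => /orP[/eqP g|/eqP //]; by move: gBA'; rewrite g eqxx.
  have fB : fl B (P3 Q) = 0.
    move/eqP: rB'; rewrite mulf_eq0 => /orP[/eqP r|]; first by move: nr; rewrite r eqxx.
    rewrite mulf_eq0 => /orP[/eqP g|/eqP //]; by move: gAB'; rewrite g eqxx.
  apply: (qnopt hQ); exists (P3 Q); split => //; [exact: (P3_on hQ).1 | exact: (P3_on hQ).2].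
exact: resid_inV.
Qed.

End Main.


Section Core.
Variable K : fieldType.
Hypothesis two0 : (2%:R : K) != 0.

Lemma core (t u w3 w4 g1 g2 e11 e12 e21 e22 F1 F2 : K) :
  w3 * u + w4 * t = 0 ->
  g1 = t * e11 - u * e12 -> g2 = t * e21 - u * e22 -> g1 != 0 -> g2 != 0 ->
  F1 * g1 = w3 * e11 + w4 * e12 -> F2 * g2 = w3 * e21 + w4 * e22 -> F1 + F2 = 0 ->
  w3 = 0 /\ w4 = 0.
Proof.
move=> hd eg1 eg2 n1 n2 h1 h2 hF.
have h1' : F1 * g1 - (w3 * e11 + w4 * e12) = 0 by rewrite h1 subrr.
have h2' : F2 * g2 - (w3 * e21 + w4 * e22) = 0 by rewrite h2 subrr.
have k1 : g1 * (w3 - t * F1) = 0.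
  apply: (eqlin2 (c1 := (- e12)) (c2 := (- t)) hd h1').
  rewrite eg1; ring.
have k2 : g2 * (w3 - t * F2) = 0.
  apply: (eqlin2 (c1 := (- e22)) (c2 := (- t)) hd h2').
  rewrite eg2; ring.
have k3 : g1 * (w4 + u * F1) = 0.
  apply: (eqlin2 (c1 := e11) (c2 := u) hd h1').
  rewrite eg1; ring.
have k4 : g2 * (w4 + u * F2) = 0.
  apply: (eqlin2 (c1 := e21) (c2 := u) hd h2').
  rewrite eg2; ring.
move/eqP: k1; rewrite mulf_eq0 (negPf n1) /= subr_eq0 => /eqP a1.
move/eqP: k2; rewrite mulf_eq0 (negPf n2) /= subr_eq0 => /eqP a2.
move/eqP: k3; rewrite mulf_eq0 (negPf n1) /= addr_eq0 => /eqP a3.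
move/eqP: k4; rewrite mulf_eq0 (negPf n2) /= addr_eq0 => /eqP a4.
have F2e : F2 = - F1 by apply/eqP; rewrite -addr_eq0 addrC hF.
split.
- have : w3 + w3 = 0 by rewrite {1}a1 a2 F2e; ring.
  by move/eqP; rewrite -mulr2n -mulr_natr mulf_eq0 (negPf two0) orbF => /eqP.
- have : w4 + w4 = 0 by rewrite {1}a3 a4 F2e; ring.
  by move/eqP; rewrite -mulr2n -mulr_natr mulf_eq0 (negPf two0) orbF => /eqP.
Qed.

End Core.

Section Fwd.
Variable K : fieldType.
Hypothesis two0 : (2%:R : K) != 0.
Local Notation line := (line K).
Local Notation point := (point K).
Variable Q : quad K.
Hypothesis hQ : is_quad Q.
Local Notation A := (qA Q).
Local Notation B := (qB Q).
Local Notation A' := (qA' Q).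
Local Notation B' := (qB' Q).

Lemma gnz' (L S : line) : ~~ parallel L S -> gl L (dir S) != 0.
Proof. by move/npar_iff; rewrite glsym oppr_eq0. Qed.

Lemma fl_mid_eq (L : line) p q p' q' : midpt p q = midpt p' q' ->
  fl L p + fl L q = fl L p' + fl L q'.
Proof.
move=> h; have := congr1 (fl L) h; rewrite !(fl_midpt two0) => h'.
have := congr1 (fun z => z * 2%:R) h'; by rewrite /= !divfK.
Qed.

Lemma par_case (l1 l2 S S' : line) (mS mS' m1 m2 : point) (w3 w4 : K) :
  parallel l1 l2 -> ~~ parallel l1 S -> ~~ parallel l1 S' ->
  midpt mS mS' = midpt m1 m2 -> on_line l1 m1 -> on_line l2 m2 ->
  w3 * (dir l1).1 + w4 * (dir l1).2 = 0 ->
  EE l1 l2 mS (dir S) = w3 * (dir S).1 + w4 * (dir S).2 ->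
  EE l1 l2 mS' (dir S') = w3 * (dir S').1 + w4 * (dir S').2 ->
  w3 = 0 /\ w4 = 0.
Proof.
move=> /andP[/eqP et /eqP eu] n1 n2 hm o1 o2 hd h1 h2.
apply: (core two0 (t := lt l1) (u := lu l1) (g1 := gl l1 (dir S)) (g2 := gl l1 (dir S'))
  (e11 := (dir S).1) (e12 := (dir S).2) (e21 := (dir S').1) (e22 := (dir S').2)
  (F1 := fl l1 mS + fl l2 mS) (F2 := fl l1 mS' + fl l2 mS')).
- exact: hd.
- by [].
- by [].
- exact: gnz' n1.
- exact: gnz' n2.
- by rewrite -h1 /EE /gl -et -eu; ring.
- by rewrite -h2 /EE /gl -et -eu; ring.
have e1 := fl_mid_eq l1 hm; have e2 := fl_mid_eq l2 hm.
have -> : fl l1 mS + fl l2 mS + (fl l1 mS' + fl l2 mS') =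
  (fl l1 mS + fl l1 mS') + (fl l2 mS + fl l2 mS') by ring.
rewrite e1 e2.
have z1 : fl l1 m1 = 0 by [].
have z2 : fl l2 m2 = 0 by [].
have -> : fl l1 m1 + fl l1 m2 + (fl l2 m1 + fl l2 m2) =
   2%:R * (fl l1 m1 + fl l2 m2) by rewrite /fl -et -eu; ring.
by rewrite z1 z2 addr0 mulr0.
Qed.

Lemma wcond c x (l : line) : DC c x (dir l) = 0 -> EE A A' x (dir l) = 0 ->
  EE B B' x (dir l) = 0 -> rho Q c = 0 -> w3 Q c * (dir l).1 + w4 Q c * (dir l).2 = 0.
Proof.
move=> h e1 e2 r0.
have := resid_DC hQ c x (dir l); rewrite resid_DC' h e1 e2 r0 => h'.
transitivity (0 * EE A B x (dir l) + (w3 Q c * (dir l).1 + w4 Q c * (dir l).2)); first by ring.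
by rewrite -h'; ring.
Qed.

Lemma wside c x (S : line) : EE A A' x (dir S) = 0 -> EE B B' x (dir S) = 0 ->
  rho Q c = 0 -> DC c x (dir S) = w3 Q c * (dir S).1 + w4 Q c * (dir S).2.
Proof.
move=> e1 e2 r0.
have := resid_DC hQ c x (dir S); rewrite resid_DC' e1 e2 r0 => h'.
transitivity (DC c x (dir S) - aC Q c * 0 - bC Q c * 0); first by ring.
by rewrite h'; ring.
Qed.

Lemma Cfwd l1 l2 : Q_pair Q l1 l2 -> inV Q (prodp l1 l2).
Proof.
case=> m1 [m2 [b1 b2 hc ho]].
move/(L1 two0 hQ): b1 => [x1 [[ex1] o1 eA1 eB1]]; subst x1.
move/(L1 two0 hQ): b2 => [x2 [[ex2] o2 eA2 eB2]]; subst x2.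
set c := prodp l1 l2.
have r0 : rho Q c = 0.
  have hP : alpha Q * c0 (rr Q c) + beta Q * c1 (rr Q c) + gamma Q * c2 (rr Q c) = 0.
    have -> : alpha Q * c0 (rr Q c) + beta Q * c1 (rr Q c) + gamma Q * c2 (rr Q c) =
      (alpha Q * c0 c + beta Q * c1 c + gamma Q * c2 c)
      - aC Q c * (alpha Q * c0 (pA Q) + beta Q * c1 (pA Q) + gamma Q * c2 (pA Q))
      - bC Q c * (alpha Q * c0 (pB Q) + beta Q * c1 (pB Q) + gamma Q * c2 (pB Q)).
      rewrite /rr /lc3 /=; ring.
    rewrite /c /pA /pB !PhiL_prodp.
    have e1 := Phi_AA' Q; have e2 := Phi_BB' Q; rewrite /dir in e1 e2.
    rewrite e1 e2; move: ho; rewrite /Q_orthogonal => ->; ring.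
  case: (resid_quad hQ c) => h0 h1 h2.
  rewrite h0 h1 h2 in hP.
  have : rho Q c * qform Q (dir A) (dir B) = 0.
    rewrite -hP /dir -PhiL_prodp /pAB; ring.
  have nz : gl A' (dir B) * gl B' (dir A) * gl A (dir B) != 0.
    by rewrite !mulf_neq0 // ?(gA'B hQ) ?(gB'A hQ) ?(gAB hQ).
  rewrite Phi_AB => /eqP; rewrite mulf_eq0 (negPf nz) orbF => /eqP //.
have wd1 : w3 Q c * (dir l1).1 + w4 Q c * (dir l1).2 = 0.
  apply: (wcond (x := m1)) => //; rewrite /c DC_prodp; exact: EE_self1 o1 erefl.
have wd2 : w3 Q c * (dir l2).1 + w4 Q c * (dir l2).2 = 0.
  apply: (wcond (x := m2)) => //; rewrite /c DC_prodp; exact: EE_self2 o2 erefl.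
case: (boolP (parallel l1 l2)) => hp; last first.
  have [z3 z4] := W0 (d := dir l1) (e := dir l2) (den_nz hp) wd1 wd2.
  exact: (@resid_inV K Q hQ c r0 z3 z4).
case: (boolP (~~ parallel l1 A && ~~ parallel l1 A')) => [/andP[nA nA']|hAA].
  have [sa1 [sa2 sa3]] := sideA two0 hQ; have [sb1 [sb2 sb3]] := sideA' two0 hQ.
  have [z3 z4] := par_case hp nA nA' (etrans (cent_A two0 hQ) (esym hc)) o1 o2 wd1
    (etrans (esym (DC_prodp _ _ _ _)) (wside sa2 sa3 r0))
    (etrans (esym (DC_prodp _ _ _ _)) (wside sb2 sb3 r0)).
  exact: (@resid_inV K Q hQ c r0 z3 z4).
have X : forall S T, ~~ parallel S T -> parallel l1 S -> ~~ parallel l1 T.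
  move=> S T h h1; apply/negP => h2; move: h; rewrite (par_trans _ h2) //; by rewrite par_sym.
have [nB nB'] : ~~ parallel l1 B /\ ~~ parallel l1 B'.
  case/nandP: hAA => /negPn h.
  - by split; [apply: (X A) => //; exact: nAB | apply: (X A) => //; exact: nAB'].
  - by split; [apply: (X A') => //; exact: nA'B | apply: (X A') => //; exact: nA'B'].
have [sa1 [sa2 sa3]] := sideB two0 hQ; have [sb1 [sb2 sb3]] := sideB' two0 hQ.
have [z3 z4] := par_case hp nB nB' (etrans (cent_B two0 hQ) (esym hc)) o1 o2 wd1
  (etrans (esym (DC_prodp _ _ _ _)) (wside sa2 sa3 r0))
  (etrans (esym (DC_prodp _ _ _ _)) (wside sb2 sb3 r0)).
exact: (@resid_inV K Q hQ c r0 z3 z4).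
Qed.

End Fwd.


Section Bwd.
Variable K : fieldType.
Hypothesis two0 : (2%:R : K) != 0.
Local Notation line := (line K).
Local Notation point := (point K).

Lemma cent_pair (l1 l2 S S' : line) mS mS' x1 x2 :
  ~~ parallel l1 S -> ~~ parallel l1 S' -> ~~ parallel l2 S -> ~~ parallel l2 S' ->
  on_line S mS -> on_line S' mS' -> EE l1 l2 mS (dir S) = 0 -> EE l1 l2 mS' (dir S') = 0 ->
  on_line l1 x1 -> EE S S' x1 (dir l1) = 0 -> on_line l2 x2 -> EE S S' x2 (dir l2) = 0 ->
  midpt x1 x2 = midpt mS mS'.
Proof.
move=> h1 h2 h3 h4 oS oS' eS eS' o1 e1 o2 e2.
have [k1 k2] := M1 two0 h1 h2.
have ex1 := M2 two0 (gnz h1) (gnz h2) o1 k1 e1 k2.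
have [k3 k4] := M1 two0 h3 h4.
have ex2 := M2 two0 (gnz h3) (gnz h4) o2 k3 e2 k4.
have h1' : ~~ parallel S l1 by rewrite par_sym.
have h2' : ~~ parallel S' l1 by rewrite par_sym.
have h3' : ~~ parallel S l2 by rewrite par_sym.
have h4' : ~~ parallel S' l2 by rewrite par_sym.
have [k5 k6] := M1 two0 h1' h3'.
have emS := M2 two0 (gnz h1') (gnz h3') oS k5 eS k6.
have [k7 k8] := M1 two0 h2' h4'.
have emS' := M2 two0 (gnz h2') (gnz h4') oS' k7 eS' k8.
rewrite ex1 ex2 emS emS' (meetS h1) (meetS h2) (meetS h3) (meetS h4).
move: (meet S l1) (meet S' l1) (meet S l2) (meet S' l2) => p q r s.
rewrite /midpt /=; congr pair; field; exact: two0.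
Qed.

Variable Q : quad K.
Hypothesis hQ : is_quad Q.
Local Notation A := (qA Q).
Local Notation B := (qB Q).
Local Notation A' := (qA' Q).
Local Notation B' := (qB' Q).

Lemma sep_helper (X l1 l2 : line) (a b : K) :
  (forall d, gl l1 d * gl l2 d = a * (gl A d * gl A' d) + b * (gl B d * gl B' d)) ->
  gl A (dir X) * gl A' (dir X) = 0 -> gl B (dir X) * gl B' (dir X) != 0 ->
  parallel l1 X || parallel l2 X -> b = 0.
Proof.
move=> hq hA hB hp.
have z : gl l1 (dir X) * gl l2 (dir X) = 0.
  case/orP: hp => /par_iff h; rewrite glsym in h.
  - move/eqP: h; rewrite oppr_eq0 => /eqP ->; ring.
  - move/eqP: h; rewrite oppr_eq0 => /eqP ->; ring.
move: (hq (dir X)); rewrite z hA mulr0 add0r => /esym/eqP.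
by rewrite mulf_eq0 (negPf hB) orbF => /eqP.
Qed.

Lemma sep_helper' (X l1 l2 : line) (a b : K) :
  (forall d, gl l1 d * gl l2 d = a * (gl A d * gl A' d) + b * (gl B d * gl B' d)) ->
  gl B (dir X) * gl B' (dir X) = 0 -> gl A (dir X) * gl A' (dir X) != 0 ->
  parallel l1 X || parallel l2 X -> a = 0.
Proof.
move=> hq hB hA hp.
have z : gl l1 (dir X) * gl l2 (dir X) = 0.
  case/orP: hp => /par_iff h; rewrite glsym in h.
  - move/eqP: h; rewrite oppr_eq0 => /eqP ->; ring.
  - move/eqP: h; rewrite oppr_eq0 => /eqP ->; ring.
move: (hq (dir X)); rewrite z hB mulr0 addr0 => /esym/eqP.
by rewrite mulf_eq0 (negPf hA) orbF => /eqP.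
Qed.

Lemma Cbwd l1 l2 : inV Q (prodp l1 l2) -> Q_pair Q l1 l2.
Proof.
case=> a [b [k e]].
have hDC : forall x d, EE l1 l2 x d = a * EE A A' x d + b * EE B B' x d.
  move=> x d; by rewrite -DC_prodp e DC_comb /pA /pB !DC_prodp.
have hq : forall d, gl l1 d * gl l2 d = a * (gl A d * gl A' d) + b * (gl B d * gl B' d).
  move=> d; by rewrite -qc_prodp e qc_comb /pA /pB !qc_prodp.
have ab : ~ (a = 0 /\ b = 0).
  case=> a0 b0; apply: (norm_prod_nz (l1 := l1) (l2 := l2)).
  have := congr1 (@c0 K) e; have := congr1 (@c1 K) e; have := congr1 (@c2 K) e.
  rewrite /= a0 b0 !mul0r !addr0 => h2 /eqP h1 h0; split => //.
  by apply/eqP; rewrite -oppr_eq0.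
have X : forall (l S T : line), ~~ parallel S T -> parallel l S -> parallel l T -> False.
  move=> l S T h h1 h2; move: h; rewrite (par_trans _ h2) //; by rewrite par_sym.
have bis : forall (l : line),
    (forall x, on_line l x -> a * EE A A' x (dir l) + b * EE B B' x (dir l) = 0) ->
    exists x, [/\ on_line l x, EE A A' x (dir l) = 0 & EE B B' x (dir l) = 0].
  move=> l H.
  case: (boolP (gl A (dir l) * gl A' (dir l) == 0)) => hA; last exact: BEgen hA H ab.
  case: (boolP (gl B (dir l) * gl B' (dir l) == 0)) => hB.
    exfalso.
    move: hA hB; rewrite !mulf_eq0 => /orP[/eqP/par_iff hA|/eqP/par_iff hA]
      /orP[/eqP/par_iff hB|/eqP/par_iff hB].
    - exact: (X l _ _ (nAB hQ) hA hB).
    - exact: (X l _ _ (nAB' hQ) hA hB).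
    - exact: (X l _ _ (nA'B hQ) hA hB).
    - exact: (X l _ _ (nA'B' hQ) hA hB).
  have H' : forall x, on_line l x -> b * EE B B' x (dir l) + a * EE A A' x (dir l) = 0.
    by move=> x /H; rewrite addrC.
  have ab' : ~ (b = 0 /\ a = 0) by case=> ? ?; apply: ab.
  have [x [h1 h2 h3]] := BEgen two0 hB H' ab'.
  by exists x; split.
have [x1 [o1 a1 b1]] : exists x, [/\ on_line l1 x, EE A A' x (dir l1) = 0
    & EE B B' x (dir l1) = 0].
  apply: bis => x o; rewrite -hDC; exact: EE_self1 o erefl.
have [x2 [o2 a2 b2]] : exists x, [/\ on_line l2 x, EE A A' x (dir l2) = 0
    & EE B B' x (dir l2) = 0].
  apply: bis => x o; rewrite -hDC; exact: EE_self2 o erefl.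
exists x1, x2; split.
- apply/(L1 two0 hQ); exists x1; by split.
- apply/(L1 two0 hQ); exists x2; by split.
- case: (boolP [&& ~~ parallel l1 A, ~~ parallel l1 A', ~~ parallel l2 A & ~~ parallel l2 A']).
    case/and4P => h1 h2 h3 h4.
    have [sa1 [sa2 sa3]] := sideA two0 hQ; have [sb1 [sb2 sb3]] := sideA' two0 hQ.
    rewrite -(cent_A two0 hQ).
    apply: (cent_pair h1 h2 h3 h4 sa1 sb1 _ _ o1 a1 o2 a2).
    + by rewrite hDC sa2 sa3; ring.
    + by rewrite hDC sb2 sb3; ring.
  move=> nall.
  have b0 : b = 0.
    have zA : gl A (dir A) * gl A' (dir A) = 0 by rewrite gl_self mul0r.
    have zA' : gl A (dir A') * gl A' (dir A') = 0 by rewrite gl_self mulr0.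
    have nzA : gl B (dir A) * gl B' (dir A) != 0 by rewrite mulf_neq0 ?(gBA hQ) ?(gB'A hQ).
    have nzA' : gl B (dir A') * gl B' (dir A') != 0
      by rewrite mulf_neq0 ?(gBA' hQ) ?(gnz (nA'B' hQ)).
    have : [|| parallel l1 A, parallel l1 A', parallel l2 A | parallel l2 A'].
      by move: nall; case: (parallel l1 A); case: (parallel l1 A');
         case: (parallel l2 A); case: (parallel l2 A').
    case/or4P => h.
    + by apply: (sep_helper hq zA nzA); rewrite h.
    + by apply: (sep_helper hq zA' nzA'); rewrite h.
    + by apply: (sep_helper hq zA nzA); rewrite h orbT.
    + by apply: (sep_helper hq zA' nzA'); rewrite h orbT.
  have nY : forall Y, gl B (dir Y) * gl B' (dir Y) = 0 -> gl A (dir Y) * gl A' (dir Y) != 0 ->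
      ~~ parallel l1 Y && ~~ parallel l2 Y.
    move=> Y hB hA; rewrite -negb_or; apply/negP => hp; apply: ab; split => //.
    exact: sep_helper' hq hB hA hp.
  have /andP[h1 h3] := nY B (etrans (congr1 (fun z => z * _) (gl_self B)) (mul0r _))
    (mulf_neq0 (gAB hQ) (gA'B hQ)).
  have /andP[h2 h4] := nY B' (etrans (congr1 (fun z => _ * z) (gl_self B')) (mulr0 _))
    (mulf_neq0 (gAB' hQ) (gnz (nB'A' hQ))).
  have [sa1 [sa2 sa3]] := sideB two0 hQ; have [sb1 [sb2 sb3]] := sideB' two0 hQ.
  rewrite -(cent_B two0 hQ).
  apply: (cent_pair h1 h2 h3 h4 sa1 sb1 _ _ o1 b1 o2 b2).
  + by rewrite hDC sa2 sa3; ring.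
  + by rewrite hDC sb2 sb3; ring.
- rewrite /Q_orthogonal -PhiL_prodp e.
  have -> : forall p q : poly2 K, alpha Q * c0 (comb a b k p q) + beta Q * c1 (comb a b k p q)
     + gamma Q * c2 (comb a b k p q) = a * (alpha Q * c0 p + beta Q * c1 p + gamma Q * c2 p)
     + b * (alpha Q * c0 q + beta Q * c1 q + gamma Q * c2 q).
    by move=> p q; rewrite /comb /=; ring.
  rewrite /pA /pB !PhiL_prodp.
  have e1 := Phi_AA' Q; have e2 := Phi_BB' Q; rewrite /dir in e1 e2.
  rewrite e1 e2; ring.
Qed.

End Bwd.


Theorem corollary6p10 (K : fieldType) (char_not_2 : (2%:R : K) != 0)
    (Q1 Q2 : quad K) :
  is_quad Q1 -> is_quad Q2 ->
  ((forall (l : line K) (m : option (point K)),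
       bisects_with_mid Q1 l m <-> bisects_with_mid Q2 l m)
   <->
   (forall l1 l2 : line K, bisector_field Q1 l1 l2 <-> bisector_field Q2 l1 l2)).
Proof.
move=> h1 h2.
have fwd : forall Qa Qb : quad K, is_quad Qa -> is_quad Qb ->
    (forall l m, bisects_with_mid Qa l m <-> bisects_with_mid Qb l m) ->
    forall l1 l2, Q_pair Qa l1 l2 -> Q_pair Qb l1 l2.
  move=> Qa Qb ha hb H l1 l2 /(Cfwd char_not_2 ha) hv.
  apply: (Cbwd char_not_2 hb); apply: (P3main char_not_2 hb) => l x /(H l (Some x)).2 hx.
  exact: (V_bis char_not_2 ha hv hx).
have bwd : forall Qa Qb : quad K, is_quad Qa -> is_quad Qb ->
    (forall l1 l2, Q_pair Qa l1 l2 <-> Q_pair Qb l1 l2) ->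
    forall l m, bisects_with_mid Qa l m -> bisects_with_mid Qb l m.
  move=> Qa Qb ha hb H l m hm.
  have hm' := hm.
  move/(L1 char_not_2 ha): hm => [x [ex o e1 e2]]; subst m.
  apply/(L1 char_not_2 hb); exists x; split => //.
  - have pr : Q_pair Qb (qA Qb) (qA' Qb).
      apply: (Cbwd char_not_2 hb); exists 1, 0, 0; exact: comb10.
    have hv := Cfwd char_not_2 ha ((H _ _).2 pr).
    by have := V_bis char_not_2 ha hv hm'; rewrite DC_prodp.
  - have pr : Q_pair Qb (qB Qb) (qB' Qb).
      apply: (Cbwd char_not_2 hb); exists 0, 1, 0.
      rewrite /pB /pA; case: (prodp _ _) => ? ? ? ? ? ?; case: (prodp _ _) => ? ? ? ? ? ?.
      rewrite /comb /=; congr Pol; ring.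
    have hv := Cfwd char_not_2 ha ((H _ _).2 pr).
    by have := V_bis char_not_2 ha hv hm'; rewrite DC_prodp.
split => H.
- move=> l1 l2; split; first exact: fwd.
  apply: fwd => // l m; exact: iff_sym.
- move=> l m; split; first exact: bwd.
  apply: bwd => // l1 l2; exact: iff_sym.
Qed.
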